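(* Let $(K,\mathrm{val})$ be a $2$-henselian valued field whose residue class field $F$ has characteristic $\neq 2$, let $A$ be a subring with $B\subseteq A\subseteq K$, $H=\mathrm{val}(A^\times)$, and let $\mathcal M$ be a quasi-quadratic module in $A$. Then $$\mathcal M=\bigcup_{g\in H\cup G_{\ge e}}\Phi^A\big(M_g^A(\mathcal M),[\![g]\!]\big).$$
   Context: Let $(G,\le)$ be a totally ordered abelian group written multiplicatively with identity $e$; $G_{\ge e}=\{g\in G:g\ge e\}$, $G^2=\{g^2:g\in G\}$. Let $(K,\mathrm{val})$ be a valued field with surjective valuation $\mathrm{val}:K\to G\cup\{\infty\}$, valuation ring $B=\{x:\mathrm{val}(x)\ge e\}$, residue map $\pi:B\to F$, residue field $F$. A strict unit is $x\in B^\times$ with $\pi(x)=1$; when $\mathrm{char}F\ne2$, $2$-henselian is equivalent to every strict unit being a square in $K$. For a subring $A$ with $B\subseteq A\subseteq K$ put $H=\mathrm{val}(A^\times)$; $H$ is a convex subgroup of $G$ and $\mathrm{val}(A\setminus\{0\})=H\cup G_{\ge e}$. For $g\in G$: $\overline g$ is its class in $G/G^2$, $[\![g]\!]$ its class in $G/H^2$; ''$\mathrm{val}(x)=\overline g$'' means $\overline{\mathrm{val}(x)}=\overline g$, similarly for $[\![\cdot]\!]$. A quasi-quadratic module in a commutative ring $R$ is a subset $M\subseteq R$ with $M+M\subseteq M$ and $a^2M\subseteq M$ for all $a\in R$. A pseudo-angular component map is a map $\mathrm{p.an}:K^\times\to F^\times$ such that: (1) $\mathrm{p.an}(u)=\pi(u)$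 for $u\in B^\times$; (2) $\mathrm{p.an}(ux)=\pi(u)\mathrm{p.an}(x)$ for $u\in B^\times,x\in K^\times$; (3) for all $g\in G$, $c\in F^\times$ there is $w\in K$ with $\mathrm{val}(w)=g$, $\mathrm{p.an}(w)=c$; (4) for nonzero $x_1,x_2$ with $x_1+x_2\ne0$: if $\mathrm{val}(x_1)<\mathrm{val}(x_2)$ then $\mathrm{p.an}(x_1+x_2)=\mathrm{p.an}(x_1)$; if $\mathrm{val}(x_1)=\mathrm{val}(x_2)$ and $\mathrm{p.an}(x_1)+\mathrm{p.an}(x_2)\ne0$ then $\mathrm{val}(x_1+x_2)=\mathrm{val}(x_1)$ and $\mathrm{p.an}(x_1+x_2)=\mathrm{p.an}(x_1)+\mathrm{p.an}(x_2)$; (5) if $x,y\in K^\times$, $\overline{\mathrm{val}(x)}=\overline{\mathrm{val}(y)}$ and $\mathrm{p.an}(x)=\mathrm{p.an}(y)$ then $y=u^2x$ for some $u\in K^\times$; (6) for $a,u\in K^\times$ there is $k\in F^\times$ with $\mathrm{p.an}(au^2)=\mathrm{p.an}(a)k^2$. Such a map exists under the hypotheses; fix one. For $g\in G$ and a quasi-quadratic module $M$ in $F$: $$\Phi^A(M,[\![g]\!])=\{x\in A\setminus\{0\}:\ \mathrm{val}(x)=\overline g,\ (\mathrm{val}(x)=[\![g]\!]\ \text{or}\ \mathrm{val}(x)>g),\ \mathrm{p.an}(x)\in M\}\cup\{0\}.$$ For a quasi-quadratic module $\mathcal M$ in $A$ and $g\in G$: $M_g^A(\mathcal M)=\{\mathrm{p.an}(x):x\in\mathcal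 M\setminus\{0\},\ \mathrm{val}(x)=g\}\cup\{0\}$. *)

(* Defs.v *)
From mathcomp Require Import all_boot all_order all_algebra.
Import GRing.Theory.
Local Open Scope ring_scope.

(* The paper's multiplicative group (G, <=, e) is rendered as a zmodType G
   with 0 = e, + = group law, g + g = g^2, together with a relation le. *)
Definition ordered_group {G : zmodType} (le : rel G) : Prop :=
  [/\ reflexive le, antisymmetric le, transitive le, total le
    & forall x y z : G, le x y -> le (x + z) (y + z)].

Definition glt {G : zmodType} (le : rel G) (x y : G) : bool :=
  (x != y) && le x y.

(* G \cup {oo}: None stands for oo *)
Definition vle {G : zmodType} (le : rel G) (a b : option G) : bool :=
  match a, b with
  | _, None => true
  | None, Some _ => false
  | Some x, Some y => le x y
  end.

Definition vlt {G : zmodType} (le : rel G) (a b : option G) : bool :=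
  (a != b) && vle le a b.

Definition vadd {G : zmodType} (a b : option G) : option G :=
  match a, b with
  | Some x, Some y => Some (x + y)
  | _, _ => None
  end.

Definition valuation {G : zmodType} (le : rel G) {K : fieldType}
  (val : K -> option G) : Prop :=
  [/\ (forall x, val x = None <-> x = 0),
      (forall x y, val (x * y) = vadd (val x) (val y)),
      (forall x y g, vle le g (val x) -> vle le g (val y) ->
                     vle le g (val (x + y)))
    & (forall g : G, exists x, val x = Some g)].

Definition Bring {G : zmodType} (le : rel G) {K : fieldType}
  (val : K -> option G) (x : K) : Prop := vle le (Some 0) (val x).

(* residue map pi : B -> F (values outside B are irrelevant) *)
Definition residue_map {G : zmodType} (le : rel G) {K F : fieldType}
  (val : K -> option G) (res : K -> F) : Prop :=
  [/\ res 1 = 1,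
      (forall x y, Bring le val x -> Bring le val y -> res (x + y) = res x + res y),
      (forall x y, Bring le val x -> Bring le val y -> res (x * y) = res x * res y),
      (forall c : F, exists x, Bring le val x /\ res x = c)
    & (forall x, Bring le val x -> (res x = 0 <-> vlt le (Some 0) (val x)))].

Definition strict_unit {G : zmodType} {K F : fieldType}
  (val : K -> option G) (res : K -> F) (x : K) : Prop :=
  val x = Some 0 /\ res x = 1.

(* 2-henselian (for char F <> 2): every strict unit is a square *)
Definition two_henselian {G : zmodType} {K F : fieldType}
  (val : K -> option G) (res : K -> F) : Prop :=
  forall x, strict_unit val res x -> exists y, x = y ^+ 2.

Definition sqclass_eq {G : zmodType} (g h : G) : Prop :=
  exists k : G, g = h + (k + k).

Definition Hgrp {G : zmodType} {K : fieldType} (val : K -> option G)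
  (A : K -> Prop) (g : G) : Prop :=
  exists x, A x /\ (exists y, A y /\ x * y = 1) /\ val x = Some g.

Definition sqclassH_eq {G : zmodType} {K : fieldType} (val : K -> option G)
  (A : K -> Prop) (g h : G) : Prop :=
  exists k : G, Hgrp val A k /\ g = h + (k + k).

Definition subring {K : fieldType} (A : K -> Prop) : Prop :=
  [/\ A 1, (forall x y, A x -> A y -> A (x - y))
    & (forall x y, A x -> A y -> A (x * y))].

(* quasi-quadratic module M in the subring A of R (taken nonempty, i.e. 0 \in M) *)
Definition qqm {R : comNzRingType} (A : R -> Prop) (M : R -> Prop) : Prop :=
  [/\ (forall x, M x -> A x), M 0,
      (forall x y, M x -> M y -> M (x + y))
    & (forall a x, A a -> M x -> M (a ^+ 2 * x))].

Definition pseudo_angular {G : zmodType} (le : rel G) {K F : fieldType}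
  (val : K -> option G) (res : K -> F) (pan : K -> F) : Prop :=
  (forall x, x != 0 -> pan x != 0) /\
  (forall u, val u = Some 0 -> pan u = res u) /\
  (forall u x, val u = Some 0 -> x != 0 -> pan (u * x) = res u * pan x) /\
  (forall (g : G) (c : F), c != 0 ->
               exists w, val w = Some g /\ pan w = c) /\
  (forall x1 x2, x1 != 0 -> x2 != 0 -> x1 + x2 != 0 ->
               (vlt le (val x1) (val x2) -> pan (x1 + x2) = pan x1) /\
               (val x1 = val x2 -> pan x1 + pan x2 != 0 ->
                  val (x1 + x2) = val x1 /\ pan (x1 + x2) = pan x1 + pan x2)) /\
  (forall x y gx gy, x != 0 -> y != 0 -> val x = Some gx ->
               val y = Some gy -> sqclass_eq gx gy -> pan x = pan y ->
               exists u, u != 0 /\ y = u ^+ 2 * x) /\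
  (forall a u, a != 0 -> u != 0 ->
               exists k, k != 0 /\ pan (a * u ^+ 2) = pan a * k ^+ 2).

Definition PhiA {G : zmodType} (le : rel G) {K F : fieldType}
  (val : K -> option G) (pan : K -> F) (A : K -> Prop) (M : F -> Prop)
  (g : G) (x : K) : Prop :=
  x = 0 \/
  (A x /\ x != 0 /\
   exists gx, val x = Some gx /\ sqclass_eq gx g /\
              (sqclassH_eq val A gx g \/ glt le g gx) /\ M (pan x)).

Definition MgA {G : zmodType} {K F : fieldType}
  (val : K -> option G) (pan : K -> F) (MM : K -> Prop) (g : G) (c : F) : Prop :=
  c = 0 \/ exists x, MM x /\ x != 0 /\ val x = Some g /\ pan x = c.

(* Main.v *)
Require Import Defs.
From mathcomp Require Import all_boot all_order all_algebra.
Import GRing.Theory.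
Local Open Scope ring_scope.

Theorem mainTheorem6 (G : zmodType) (le : rel G) (K F : fieldType)
  (val : K -> option G) (res : K -> F) (pan : K -> F)
  (A : K -> Prop) (MM : K -> Prop) :
  ordered_group le ->
  valuation le val ->
  residue_map le val res ->
  (2%:R : F) != 0 ->
  two_henselian val res ->
  pseudo_angular le val res pan ->
  subring A ->
  (forall x, Bring le val x -> A x) ->
  qqm A MM ->
  forall x : K,
    MM x <-> exists g : G, (Hgrp val A g \/ le 0 g) /\
                           PhiA le val pan A (MgA val pan MM g) g x.
Proof.
move=> [lrefl lanti ltrans ltot ltr] [v0 vM vD vsurj] _ _ _
  [pan0 [p1 [p2 [p3 [p4 [p5 p6]]]]]] [A1 AB AM] BA [MA M0 MD Msq] x.
have vSome : forall y, y != 0 -> exists g, val y = Some g.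
  move=> y y0; case E: (val y) => [g|]; first by exists g.
  by move/v0: E => E; rewrite E eqxx in y0.
have val1 : val 1 = Some 0.
  have [a Ea] := vSome 1 (oner_neq0 K).
  have E : a + a = a + 0 by move: (vM 1 1); rewrite mulr1 Ea /= addr0 => -[] <-.
  by rewrite Ea (addrI a E).
have vinv : forall y g, y != 0 -> val y = Some g -> val y^-1 = Some (- g).
  move=> y g y0 Ey; have [h Eh] := vSome y^-1 (invr_neq0 y0).
  have := vM y y^-1; rewrite mulfV // val1 Ey Eh /= => -[] E.
  by congr Some; apply/eqP; rewrite -addr_eq0 addrC -E.
have tfree : forall a b : G, a + a = b + b -> a = b.
  move=> a b E.
  wlog lab : a b E / le a b.
    move=> W; case/orP: (ltot a b) => h; first exact: W.
    by symmetry; apply: W.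
  have h1 : le (a + a) (a + b) by rewrite [a + b]addrC; exact: ltr.
  have h2 : le (a + b) (b + b) := ltr _ _ _ lab.
  have : a + a = a + b.
    by apply: lanti; rewrite h1 /=; rewrite E; exact: h2.
  by move/(addrI a).
split.
- move=> Mx; have [->|x0] := eqVneq x 0.
    by exists 0; split; [right; exact: lrefl | left].
  have [gx Ex] := vSome x x0.
  exists gx; split.
    case/orP: (ltot 0 gx) => h; [by right|left].
    exists x; split; first exact: MA.
    split; last by [].
    exists x^-1; split; last by rewrite mulfV.
    apply: (BA); rewrite /Bring (vinv _ _ x0 Ex) /=.
    by have := ltr _ _ (- gx) h; rewrite subrr add0r.
  right; split; first exact: MA.
  split; first by [].
  exists gx; split; first by [].
  split; first by exists 0; rewrite addr0 addr0.
  split; first by left; exists 0; rewrite !addr0; split=> //; exists 1;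
    split; [exact: A1 | split; [exists 1; split; [exact: A1| rewrite mulr1]|]].
  by right; exists x.
- move=> [g [_ [->|[Ax [x0 [gx [Ex [[k Ek] [Hc Mc]]]]]]]]]; first exact: M0.
  case: Mc => [pz|[y [My [y0 [Ey Py]]]]].
    by move: (pan0 x x0); rewrite pz eqxx.
  have sq : sqclass_eq g gx by exists (- k); rewrite Ek -addrA -opprD subrr addr0.
  have [u [u0 xu]] := p5 y x g gx y0 x0 Ey Ex sq Py.
  have [vu Eu] := vSome u u0.
  have gxe : gx = vu + vu + g.
    by move: Ex; rewrite xu vM expr2 vM Eu Ey /= => -[].
  suff Au : A u by rewrite xu; exact: Msq.
  case: Hc => [[h [[z [Az [[w [Aw zw]] Ez]]] Eh]]|lt].
    have vuh : vu = h by apply: tfree; apply: (addIr g); rewrite -gxe Eh addrC.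
    have z0 : z != 0 by apply/eqP => z0; move: zw; rewrite z0 mul0r => /eqP; rewrite eq_sym oner_eq0.
    have w0 : w != 0 by apply/eqP => w0; move: zw; rewrite w0 mulr0 => /eqP; rewrite eq_sym oner_eq0.
    have [vw Ew] := vSome w w0.
    have hw : h + vw = 0 by move: (vM z w); rewrite zw val1 Ez Ew /= => -[].
    have -> : u = (u * w) * z by rewrite -mulrA [w * z]mulrC zw mulr1.
    apply: (AM) => //; apply: (BA).
    by rewrite /Bring vM Eu Ew /= vuh hw; exact: lrefl.
  apply: (BA); rewrite /Bring Eu /=.
  case/orP: (ltot 0 vu) => // h.
  have h2 : le (vu + vu) 0.
    apply: (ltrans vu); last by [].
    by have := ltr _ _ vu h; rewrite add0r.
  move: lt; rewrite /glt gxe => /andP [ne l].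
  have := ltr _ _ (- g) l; rewrite subrr addrK => l2.
  have : vu + vu = 0 by apply: lanti; rewrite h2 l2.
  by move=> E; rewrite E add0r eqxx in ne.
Qed.
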